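(* Let $R$ be a commutative ring with identity whose set of zero-divisors contains a nonzero element, and let $n>1$. Then the orthogonality graph $O(M_n(R))$ is connected and has diameter at most $4$.
   Context: The orthogonality graph $O(S)$ of a ring $S$ is the undirected graph whose vertices are the nonzero two-sided zero-divisors of $S$, distinct vertices $x,y$ being adjacent iff $xy=yx=0$; the diameter is the supremum of graph distances between vertices. *)

(* Defs.v *)
From HB Require Import structures.
From mathcomp Require Import all_boot all_order all_algebra.
Set Implicit Arguments. Unset Strict Implicit. Unset Printing Implicit Defensive.
Import GRing.Theory.
Local Open Scope ring_scope.

(* Vertices of the orthogonality graph O(S): nonzero two-sided zero-divisors,
   i.e. x <> 0 with a x = 0 and x b = 0 for some nonzero a, b. *)
Definition two_sided_zero_divisor (S : pzRingType) (x : S) : Prop :=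
  x != 0 /\ (exists a : S, a != 0 /\ a * x = 0) /\
            (exists b : S, b != 0 /\ x * b = 0).

Definition orth_adj (S : pzRingType) (x y : S) : Prop :=
  x != y /\ x * y = 0 /\ y * x = 0.

Fixpoint orth_walk_le (S : pzRingType) (k : nat) (x y : S) : Prop :=
  match k with
  | 0 => x = y
  | k'.+1 => x = y \/ exists z : S, two_sided_zero_divisor z /\ orth_adj x z /\
                                     orth_walk_le k' z y
  end.

Definition orth_connected_diam_le (S : pzRingType) (k : nat) : Prop :=
  forall x y : S, two_sided_zero_divisor x -> two_sided_zero_divisor y ->
    orth_walk_le k x y.

(* Main.v *)
Require Import Defs.
From mathcomp Require Import all_boot all_order all_algebra ring.
From Stdlib Require Import Classical.
Import GRing.Theory.
Local Open Scope ring_scope.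
Set Implicit Arguments. Unset Strict Implicit.

Lemma killrow (R : comNzRingType) n m (X : 'M[R]_n) (c : R)
  (hc : forall f g : 'I_m -> 'I_n, c * \det (mxsub f g X) = 0)
  (f g : 'I_m -> 'I_n) :
  c *: (mxsub id g X *m \adj (mxsub f g X)) = 0.
Proof.
apply/matrixP => r a; rewrite !mxE big_distrr /=.
pose f' := fun i => if i == a then r else f i.
apply: (etrans _ (hc f' g)); rewrite (expand_det_row _ a) big_distrr /=.
apply: eq_bigr => b _; rewrite !mxE /f' eqxx; congr (c * (_ * _)).
rewrite /cofactor; congr (_ * \det _); apply/matrixP => i j.
rewrite !mxE eq_sym (negbTE (neq_lift a i)) //.
Qed.

Lemma killcol (R : comNzRingType) n m (X : 'M[R]_n) (c : R)
  (hc : forall f g : 'I_m -> 'I_n, c * \det (mxsub f g X) = 0)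
  (f g : 'I_m -> 'I_n) :
  c *: (\adj (mxsub f g X) *m mxsub f id X) = 0.
Proof.
apply/matrixP => b s; rewrite !mxE big_distrr /=.
pose g' := fun j => if j == b then s else g j.
apply: (etrans _ (hc f g')); rewrite (expand_det_col _ b) big_distrr /=.
apply: eq_bigr => a _; rewrite !mxE /g' eqxx.
rewrite [X _ _ * _]mulrC; congr (c * (_ * _)).
rewrite /cofactor; congr (_ * \det _); apply/matrixP => i j.
rewrite !mxE eq_sym (negbTE (neq_lift b j)) //.
Qed.

Lemma mxsub_prod (R : comNzRingType) n m (X : 'M[R]_n) (f g : 'I_m -> 'I_n) :
  mxsub f g X = mxsub f id 1%:M *m X *m mxsub id g 1%:M.
Proof.
rewrite mul_rowsub_mx mul1mx mulmx_colsub mulmx1.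
by apply/matrixP => i j; rewrite !mxE.
Qed.

Lemma minimal_Q (P : nat -> Prop) n : ~ P 0%N -> P n ->
  exists k, (k < n)%N /\ P k.+1 /\ ~ P k.
Proof.
move=> h0; elim: n => [|m IH] hm; first by [].
case: (classic (P m)) => hPm.
  by case: (IH hPm) => k [hk [h1 h2]]; exists k; split => //; apply: ltnW.
by exists m.
Qed.

Lemma not_surj n k (f0 : 'I_k -> 'I_n) : (k < n)%N -> exists r, forall i, f0 i != r.
Proof.
move=> hk; apply: NNPP => H.
have Hall : forall r, r \in codom f0.
  move=> r; apply: NNPP => Hr; apply: H; exists r => i; apply/eqP => e.
  by apply: Hr; rewrite -e codom_f.
have : (#|'I_n| <= #|codom f0|)%N.
  by apply: subset_leq_card; apply/subsetP => r _; apply: Hall.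
move/leq_trans/(_ (card_size _)); rewrite size_codom !card_ord => h.
by move: (leq_trans hk h); rewrite ltnn.
Qed.

Lemma ann2 (R : comNzRingType) n (X B : 'M[R]_n) : B != 0 -> X *m B = 0 ->
  exists W, W != 0 /\ X *m W = 0 /\ W *m X = 0.
Proof.
move=> hB hXB.
have [i [j hij]] : exists i j, B i j != 0.
  apply: NNPP => H; move/negP: hB; apply; apply/eqP/matrixP => i j.
  rewrite mxE; apply: NNPP => e; apply: H; exists i, j; exact/eqP.
have hdet : B i j * \det X = 0.
  have : (\adj X *m X *m B) i j = 0 by rewrite -mulmxA hXB mulmx0 mxE.
  by rewrite mul_adj_mx mul_scalar_mx mxE mulrC.
pose Q m := exists c : R, c != 0 /\ forall f g : 'I_m -> 'I_n, c * \det (mxsub f g X) = 0.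
have hQ0 : ~ Q 0%N.
  case=> c [hc H]; have := H (widen_ord (leq0n n)) (widen_ord (leq0n n)).
  by rewrite det_mx00 mulr1 => e; move: hc; rewrite e eqxx.
have hQn : Q n.
  exists (B i j); split => // f g; rewrite mxsub_prod !det_mulmx.
  transitivity ((B i j * \det X) * (\det (mxsub f id (1%:M : 'M[R]_n)) * \det (mxsub id g (1%:M : 'M[R]_n)))); first by ring.
  by rewrite hdet mul0r.
have [k [hk [[c [hc Hc]] nQ]]] := @minimal_Q Q n hQ0 hQn.
have [f0 [g0 hne]] : exists f0 g0 : 'I_k -> 'I_n, c * \det (mxsub f0 g0 X) != 0.
  apply: NNPP => H; apply: nQ; exists c; split => // f0 g0.
  apply: NNPP => e; apply: H; exists f0, g0; exact/eqP.
have [r hr] := @not_surj n k f0 hk.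
have [s hs] := @not_surj n k g0 hk.
pose f := fun i : 'I_k.+1 => if unlift ord_max i is Some j then f0 j else r.
pose g := fun i : 'I_k.+1 => if unlift ord_max i is Some j then g0 j else s.
pose S := mxsub f g X.
pose W := c *: (mxsub id g (1%:M : 'M[R]_n) *m \adj S *m mxsub f id (1%:M : 'M[R]_n)).
exists W; split; last split.
- have hf : forall a, (f a == r) = (a == ord_max).
    move=> a; rewrite /f; case: unliftP => [t ->|->]; last by rewrite !eqxx.
    by rewrite (negbTE (hr t)) eq_sym (negbTE (neq_lift _ _)).
  have hg : forall b, (s == g b) = (b == ord_max).
    move=> b; rewrite /g; case: unliftP => [t ->|->]; last by rewrite !eqxx.
    by rewrite eq_sym (negbTE (hs t)) eq_sym (negbTE (neq_lift _ _)).
  have e : W s r = c * \det (mxsub f0 g0 X).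
    rewrite /W !mxE; congr (c * _).
    rewrite (bigD1 ord_max) //= big1 ?addr0 => [|a ha]; last first.
      by rewrite !mxE hf (negbTE ha) mulr0.
    rewrite !mxE hf eqxx mulr1.
    rewrite (bigD1 ord_max) //= big1 ?addr0 => [|b hb]; last first.
      by rewrite !mxE hg (negbTE hb) mul0r.
    rewrite !mxE hg eqxx mul1r /cofactor -signr_odd addnn odd_double expr0 mul1r.
    congr (\det _); apply/matrixP => i0 j0; rewrite !mxE /f /g !liftK //.
  by apply/eqP => hW; move: hne; rewrite -e hW mxE eqxx.
- rewrite /W -scalemxAr !mulmxA mulmx_colsub mulmx1.
  by rewrite scalemxAl killrow ?mul0mx.
- rewrite /W -scalemxAl -!mulmxA mul_rowsub_mx mul1mx.
  by rewrite scalemxAr killcol // mulmx0.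
Qed.

Lemma walk_mono (S : pzRingType) k (x y : S) : orth_walk_le k x y -> orth_walk_le k.+1 x y.
Proof.
elim: k x => [|k IH] x /=; first by left.
case=> [->|[z [hz [hxz hw]]]]; first by left.
by right; exists z; split => //; split => //; apply: IH.
Qed.

Lemma walk_step (S : pzRingType) k (x z y : S) : two_sided_zero_divisor z ->
  x * z = 0 -> z * x = 0 -> orth_walk_le k z y -> orth_walk_le k.+1 x y.
Proof.
move=> hz h1 h2 hw; case: (eqVneq x z) => [->|hne]; first exact: walk_mono.
by right; exists z; split => //; split => //; split.
Qed.

Lemma vert (S : pzRingType) (x z : S) : x != 0 -> z != 0 -> x * z = 0 -> z * x = 0 ->
  two_sided_zero_divisor z.
Proof. by move=> hx hz h1 h2; split => //; split; exists x. Qed.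

Lemma nbr (R : comNzRingType) n (X : 'M[R]_n) (z w : R) : z * w = 0 -> z != 0 -> w != 0 ->
  two_sided_zero_divisor X ->
  exists (Z : 'M[R]_n) (a : R), [/\ Z != 0, a != 0, a *: Z = 0, X * Z = 0 & Z * X = 0].
Proof.
move=> hzw hz hw [hX [_ [B [hB hXB]]]].
have [W [hW [h1 h2]]] := @ann2 R n X B hB hXB.
case: (eqVneq (z *: W) 0) => hzW.
  by exists W, z.
exists (z *: W), w; split => //.
- by rewrite scalerA mulrC hzw scale0r.
- by rewrite -[X * _]/(X *m _) -scalemxAr [X *m W]h1 scaler0.
- by rewrite -[_ * X]/(_ *m X) -scalemxAl [W *m X]h2 scaler0.
Qed.

Lemma hubL (R : comNzRingType) n (s : R) (Z : 'M[R]_n) : (s%:M : 'M[R]_n) * Z = s *: Z.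
Proof. by rewrite -[_ * Z]/(_ *m Z) mul_scalar_mx. Qed.
Lemma hubR (R : comNzRingType) n (s : R) (Z : 'M[R]_n) : Z * (s%:M : 'M[R]_n) = s *: Z.
Proof. by rewrite -[Z * _]/(Z *m _) mul_mx_scalar. Qed.
Lemma hubnz (R : comNzRingType) n (s : R) : s != 0 -> (s%:M : 'M[R]_n.+1) != 0.
Proof.
move=> hs; apply/eqP => /matrixP /(_ ord0 ord0); rewrite !mxE eqxx mulr1n => e.
by move: hs; rewrite e eqxx.
Qed.

Theorem theorem4 (R : comNzRingType) (n : nat)
  (hZ : exists z : R, z != 0 /\ exists w : R, w != 0 /\ z * w = 0)
  (hn : (1 < n)%N) :
  orth_connected_diam_le 'M[R]_n 4.
Proof.
case: n hn => [|n] // _.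
case: hZ => z [hz [w [hw hzw]]].
move=> X Y hX hY.
have hX0 : X != 0 by case: hX.
have hY0 : Y != 0 by case: hY.
have [Z1 [a [hZ1 ha haZ1 h1 h1']]] := nbr hzw hz hw hX.
have [Z3 [b [hZ3 hb hbZ3 h3 h3']]] := nbr hzw hz hw hY.
have hv1 := vert hX0 hZ1 h1 h1'.
have hv3 := vert hY0 hZ3 h3 h3'.
have hvY : two_sided_zero_divisor Y by [].
have hub : forall s : R, s != 0 -> s *: Z1 = 0 -> s *: Z3 = 0 -> orth_walk_le 4 X Y.
  move=> s hs e1 e3.
  have hq := hubnz n hs.
  have hvq := vert hZ1 hq (etrans (hubR s Z1) e1) (etrans (hubL s Z1) e1).
  apply: (walk_step hv1 h1 h1').
  apply: (walk_step hvq); [by rewrite hubR e1 | by rewrite hubL e1 |].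
  apply: (walk_step hv3); [by rewrite hubL e3 | by rewrite hubR e3 |].
  by apply: (walk_step hvY h3' h3).
case: (eqVneq (b *: Z1) 0) => hbZ1; first exact: (hub b hb hbZ1 hbZ3).
case: (eqVneq (a *: Z3) 0) => haZ3; first exact: (hub a ha haZ1 haZ3).
case: (eqVneq (a * b) 0) => hab; last first.
  apply: (hub (a * b) hab).
    by rewrite mulrC -scalerA haZ1 scaler0.
  by rewrite -scalerA hbZ3 scaler0.
have sL : forall (t : R) (A B : 'M[R]_n.+1), (t *: A) * B = t *: (A * B).
  by move=> t A B; exact: (esym (scalemxAl t A B)).
have sR : forall (t : R) (A B : 'M[R]_n.+1), A * (t *: B) = t *: (A * B).
  by move=> t A B; exact: (esym (scalemxAr t A B)).
have k1 : X * (b *: Z1) = 0 by rewrite sR h1 scaler0.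
have k1' : (b *: Z1) * X = 0 by rewrite sL h1' scaler0.
have k3 : Y * (a *: Z3) = 0 by rewrite sR h3 scaler0.
have k3' : (a *: Z3) * Y = 0 by rewrite sL h3' scaler0.
have k13 : (b *: Z1) * (a *: Z3) = 0.
  rewrite sL sR scalerA mulrC hab.
  by rewrite scale0r.
have k31 : (a *: Z3) * (b *: Z1) = 0 by rewrite sL sR scalerA mulrC mulrC hab scale0r.
apply: walk_mono.
apply: (walk_step (vert hX0 hbZ1 k1 k1') k1 k1').
apply: (walk_step (vert hbZ1 haZ3 k13 k31) k13 k31).
by apply: (walk_step hvY k3' k3).
Qed.
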